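(* Let $X$ be a real Banach space and let $A \subset X$ be a balanced, bounded, convex, closed subset with nonempty interior. If there is a compact subset $K \subset X$ such that $B_X \subset A + K$, then for every $\lambda$ with $0<\lambda < 1/2$, $A$ contains a finite-codimensional ball of radius $\lambda$, i.e. there exist $x \in A$ and a finite-codimensional linear subspace $Y \subset X$ with $x + \lambda B_Y \subset A$.
   Context: $B_X$ is the closed unit ball of $X$ and $B_Y = B_X \cap Y$. $A$ is balanced if $tA \subset A$ for all $|t| \le 1$. $A + K$ is the Minkowski sum $\{a+c: a\in A, c\in K\}$. *)

(* Defs.v *)
From HB Require Import structures.
From mathcomp Require Import all_boot all_order all_algebra.
From mathcomp Require Import all_classical all_reals all_analysis.
Set Implicit Arguments. Unset Strict Implicit. Unset Printing Implicit Defensive.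
Import Order.TTheory GRing.Theory Num.Theory.
Import numFieldNormedType.Exports.
Local Open Scope classical_set_scope.
Local Open Scope ring_scope.

Definition unit_cball {R : realType} {X : normedModType R} : set X :=
  [set x | `|x| <= 1].

Definition balanced {R : realType} {X : normedModType R} (A : set X) :=
  forall t : R, `|t| <= 1 -> forall a, A a -> A (t *: a).

Definition convex {R : realType} {X : normedModType R} (A : set X) :=
  forall x y (t : R), A x -> A y -> 0 <= t -> t <= 1 ->
    A (t *: x + (1 - t) *: y).

Definition minkowski_sum {R : realType} {X : normedModType R} (A K : set X) : set X :=
  [set a + c | a in A & c in K].

Definition linear_subspace {R : realType} {X : normedModType R} (Y : set X) :=
  Y 0 /\ (forall y z, Y y -> Y z -> Y (y + z)) /\
  (forall (t : R) y, Y y -> Y (t *: y)).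

Definition finite_codim {R : realType} {X : normedModType R} (Y : set X) :=
  exists (n : nat) (v : 'I_n -> X), forall x : X,
    exists (y : X) (c : 'I_n -> R), Y y /\ x = y + \sum_(i < n) c i *: v i.

(* Main.v *)
Require Import Defs.
From HB Require Import structures.
From mathcomp Require Import all_boot all_order all_algebra.
From mathcomp Require Import all_classical all_reals all_analysis.
From mathcomp Require Import ring lra.
From mathcomp Require Import finmap.
Import Order.TTheory GRing.Theory Num.Theory.
Import numFieldNormedType.Exports.
Local Open Scope classical_set_scope.
Local Open Scope ring_scope.
Set Implicit Arguments. Unset Strict Implicit. Unset Printing Implicit Defensive.
Definition mset {R : realType} {X : normedModType R} (A : set X) (z : X) : set R :=
  [set t : R | 0 < t /\ A (t^-1 *: z)].
Definition mink {R : realType} {X : normedModType R} (A : set X) (z : X) : R :=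
  inf (mset A z).

Lemma mset_ne (R : realType) (X : normedModType R) (A : set X) (r : R) :
  0 < r -> (forall z, `|z| < r -> A z) -> forall z, mset A z !=set0.
Proof.
move=> r0 hr z; exists ((`|z| + 1) / r); split.
  by apply: divr_gt0 => //; apply: ltr_wpDl.
have hp : 0 < `|z| + 1 by apply: ltr_wpDl.
apply: hr; rewrite normrZ invf_div ger0_norm; last by apply: divr_ge0; apply: ltW.
rewrite mulrAC ltr_pdivrMr // ltr_pM2l //.
by rewrite ltrDl.
Qed.

Lemma mset_lb (R : realType) (X : normedModType R) (A : set X) z :
  lbound (mset A z) 0.
Proof. by move=> t [t0 _]; apply: ltW. Qed.

Lemma mink_le (R : realType) (X : normedModType R) (A : set X) z t :
  mset A z t -> mink A z <= t.
Proof. by move=> h; apply: ge_inf => //; exists 0; apply: mset_lb. Qed.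

Lemma mink_ge0 (R : realType) (X : normedModType R) (A : set X) (r : R) :
  0 < r -> (forall z, `|z| < r -> A z) -> forall z, 0 <= mink A z.
Proof. by move=> r0 hr z; apply: lb_le_inf; [exact: (mset_ne r0 hr z)| exact: mset_lb]. Qed.

Lemma mink_adh (R : realType) (X : normedModType R) (A : set X) (r : R) :
  0 < r -> (forall z, `|z| < r -> A z) -> forall z e, 0 < e ->
  exists2 t, mset A z t & t < mink A z + e.
Proof.
move=> r0 hr z e e0; apply: inf_adherent => //; split; first exact: (mset_ne r0 hr z).
by exists 0; apply: mset_lb.
Qed.

Lemma mink_lt1 (R : realType) (X : normedModType R) (A : set X) (r : R) :
  0 < r -> (forall z, `|z| < r -> A z) -> balanced A ->
  forall z, mink A z < 1 -> A z.
Proof.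
move=> r0 hr hb z hz.
have e0 : 0 < 1 - mink A z by rewrite subr_gt0.
have [t [t0 At] tl] := mink_adh r0 hr z e0.
have -> : z = t *: (t^-1 *: z) by rewrite scalerA divff ?scale1r // gt_eqF.
apply: hb => //; rewrite ger0_norm ?ltW //.
by move: tl; rewrite addrC subrK.
Qed.

Lemma mink_A (R : realType) (X : normedModType R) (A : set X) a :
  A a -> mink A a <= 1.
Proof. by move=> Aa; apply: mink_le; split; rewrite ?ltr01 // invr1 scale1r. Qed.

Lemma mink_small (R : realType) (X : normedModType R) (A : set X) (r : R) :
  0 < r -> (forall z, `|z| < r -> A z) ->
  forall (w : X) (d : R), 0 < d -> `|w| < d -> mink A w <= d / r.
Proof.
move=> r0 hr w d d0 wd; apply: mink_le; split; first exact: divr_gt0.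
apply: hr; rewrite normrZ invf_div ger0_norm; last by apply: divr_ge0; apply: ltW.
by rewrite mulrAC ltr_pdivrMr // ltr_pM2l.
Qed.

Lemma mink_scale_le (R : realType) (X : normedModType R) (A : set X) (r : R) :
  0 < r -> (forall z, `|z| < r -> A z) ->
  forall (z : X) (t : R), 0 < t -> mink A (t *: z) <= t * mink A z.
Proof.
move=> r0 hr z t t0; rewrite -ler_pdivrMl //.
apply: lb_le_inf; first exact: (mset_ne r0 hr z).
move=> s [s0 As]; rewrite ler_pdivrMl //; apply: mink_le; split.
  exact: mulr_gt0.
by rewrite scalerA invfM mulrAC mulVf ?gt_eqF // mul1r.
Qed.

Lemma mink_scale (R : realType) (X : normedModType R) (A : set X) (r : R) :
  0 < r -> (forall z, `|z| < r -> A z) ->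
  forall (z : X) (t : R), 0 < t -> mink A (t *: z) = t * mink A z.
Proof.
move=> r0 hr z t t0; apply/eqP; rewrite eq_le (mink_scale_le r0 hr) //=.
have ti : 0 < t^-1 by rewrite invr_gt0.
have := mink_scale_le r0 hr (t *: z) ti.
rewrite scalerA mulVf ?gt_eqF // scale1r => h.
by rewrite -ler_pdivlMl.
Qed.

Lemma mink_add (R : realType) (X : normedModType R) (A : set X) (r : R) :
  0 < r -> (forall z, `|z| < r -> A z) -> convex A ->
  forall (z w : X), mink A (z + w) <= mink A z + mink A w.
Proof.
move=> r0 hr hc z w; apply/ler_addgt0Pr => e e0.
have e20 : 0 < e / 2 by apply: divr_gt0.
have [s [s0 As] sl] := mink_adh r0 hr z e20.
have [u [u0 Au] ul] := mink_adh r0 hr w e20.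
have su0 : 0 < s + u by apply: addr_gt0.
have : mink A (z + w) <= s + u.
  apply: mink_le; split => //.
  have := hc _ _ (s / (s + u)) As Au.
  have -> : 1 - s / (s + u) = u / (s + u).
    by rewrite -[1](@divff _ (s + u)) ?gt_eqF // -mulrBl [s + u]addrC addrK.
  have -> : (s / (s + u)) *: (s^-1 *: z) + (u / (s + u)) *: (u^-1 *: w) =
            (s + u)^-1 *: (z + w).
    rewrite !scalerA scalerDr; congr (_ *: _ + _ *: _).
      by rewrite mulrAC mulfV ?gt_eqF // mul1r.
    by rewrite mulrAC mulfV ?gt_eqF // mul1r.
  apply.
  - by apply: divr_ge0; apply: ltW.
  - by rewrite ler_pdivrMr // mul1r lerDl ltW.
move=> /le_trans; apply.
have := ltrD sl ul; rewrite addrACA -splitr => /ltW.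
by [].
Qed.

Definition sublin (R : realType) (X : lmodType R) (p : X -> R) :=
  (forall x y, p (x + y) <= p x + p y) /\
  (forall (t : R) x, 0 < t -> p (t *: x) = t * p x).

Lemma sublin0 (R : realType) (X : lmodType R) (p : X -> R) :
  sublin p -> p 0 = 0.
Proof.
move=> [_ hh]; have := hh 2 0 (ltr0Sn _ 1); rewrite scaler0 => h; lra.
Qed.

Lemma sublinN (R : realType) (X : lmodType R) (p : X -> R) :
  sublin p -> forall x, - p (- x) <= p x.
Proof.
move=> hp x; rewrite lerNl; have := (proj1 hp) x (- x).
by rewrite subrr (sublin0 hp) -lerBlDl sub0r.
Qed.

Definition goodG (R : realType) (X : lmodType R) (p : X -> R) (x0 : X)
  (G : set (X * R)) :=
  [/\ G (x0, p x0),
      (forall x a y b, G (x, a) -> G (y, b) -> G (x + y, a + b)),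
      (forall (t : R) x a, G (x, a) -> G (t *: x, t * a)) &
      (forall x a, G (x, a) -> a <= p x)].

Lemma goodG_fun (R : realType) (X : lmodType R) (p : X -> R) x0 G :
  sublin p -> goodG p x0 G -> forall x a b, G (x, a) -> G (x, b) -> a = b.
Proof.
move=> hp [_ hadd hsc hdom] x a b ha hb.
have h1 := hdom _ _ (hadd _ _ _ _ ha (hsc (-1) _ _ hb)).
have h2 := hdom _ _ (hadd _ _ _ _ hb (hsc (-1) _ _ ha)).
move: h1 h2; rewrite scaleN1r subrr (sublin0 hp) => h1 h2; lra.
Qed.

Lemma hahn_banach (R : realType) (X : lmodType R) (p : X -> R) (x0 : X) :
  sublin p -> exists f : X -> R,
    [/\ (forall x y, f (x + y) = f x + f y),
        (forall (t : R) x, f (t *: x) = t * f x),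
        (forall x, f x <= p x) & f x0 = p x0].
Proof.
move=> hp; have p0 := sublin0 hp; have [psub phom] := hp.
pose P (G : set (X * R)) := G = set0 \/ goodG p x0 G.
have [M [PM Mmax]] : exists M, P M /\ forall B, M `<` B -> ~ P B.
  apply: Zorn_bigcup => F FP Ftot.
  have [[G0 FG0 [xa0 nG0]]|Fe] := pselect (exists2 G, F G & G !=set0); last first.
    left; apply/seteqP; split => // xa [G FG Gxa]; apply: Fe; exists G => //.
    by exists xa.
  have gG0 : goodG p x0 G0 by case: (FP _ FG0) => // G00; move: nG0; rewrite G00.
  have gen : forall G, F G -> (exists xa, G xa) -> goodG p x0 G.
    by move=> G /FP [->|//] [xa []].
  right; split.
  - by exists G0 => //; case: gG0.
  - move=> x a y b [G1 F1 h1] [G2 F2 h2].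
    have [s12|s21] := Ftot _ _ F1 F2.
    + exists G2 => //; have [_ hadd _ _] := gen _ F2 (ex_intro _ _ h2).
      by apply: hadd => //; apply: s12.
    + exists G1 => //; have [_ hadd _ _] := gen _ F1 (ex_intro _ _ h1).
      by apply: hadd => //; apply: s21.
  - move=> t x a [G1 F1 h1]; exists G1 => //.
    by have [_ _ hsc _] := gen _ F1 (ex_intro _ _ h1); apply: hsc.
  - move=> x a [G1 F1 h1].
    by have [_ _ _ hdom] := gen _ F1 (ex_intro _ _ h1); apply: hdom.
have gM : goodG p x0 M.
  case: PM => // M0; exfalso.
  pose G0 := [set xa : X * R | exists t : R, xa = (t *: x0, t * p x0)].
  apply: (Mmax G0); last first.
    right; split.
    - by exists 1; rewrite scale1r mul1r.
    - move=> x a y b [t [-> ->]] [s [-> ->]]; exists (t + s).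
      by rewrite scalerDl mulrDl.
    - move=> u x a [t [-> ->]]; exists (u * t).
      by rewrite scalerA mulrA.
    - move=> x a [t [-> ->]].
      have [t0|t0|->] := ltgtP t 0; last by rewrite scale0r mul0r p0.
      + have := sublinN hp (t *: x0); rewrite -scaleNr (phom (- t)) ?oppr_gt0 // => h.
        nra.
      + by rewrite phom.
  rewrite M0; split => //; move/(_ (x0, p x0)); apply.
  by exists 1; rewrite scale1r mul1r.
have Mfun := goodG_fun hp gM.
have [Mx0 Madd Msc Mdom] := gM.
have M00 : M (0, 0) by have := Msc 0 _ _ Mx0; rewrite scale0r mul0r.
have tot : forall x, exists a, M (x, a).
  move=> x1; apply/not_existsP => nx1.
  pose L := [set v : R | exists y b, M (y, b) /\ v = b - p (y - x1)].
  have Lub : forall y b z d, M (y, b) -> M (z, d) ->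
      b - p (y - x1) <= p (z + x1) - d.
    move=> y b z d hb hd; rewrite lerBrDr addrAC lerBlDr.
    apply: le_trans (Mdom _ _ (Madd _ _ _ _ hb hd)) _.
    have := psub (y - x1) (z + x1); by rewrite addrACA addNr addr0 [p (z + x1) + _]addrC.
  have Lne : L !=set0 by exists (0 - p (0 - x1)); exists 0, 0.
  have Lhas : has_ubound L.
    exists (p (0 + x1) - 0); move=> v [y0 [b0 [hb0 ->]]]; exact: Lub.
  pose c := sup L.
  have I1 : forall y b, M (y, b) -> b - p (y - x1) <= c.
    by move=> y b hb; apply: sup_upper_bound; [split|exists y, b].
  have I2 : forall z d, M (z, d) -> c <= p (z + x1) - d.
    move=> z d hd; apply: ge_sup => // v [y [b [hb ->]]]; exact: Lub.
  pose E := [set xa : X * R | exists y b (t : R),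
                M (y, b) /\ xa = (y + t *: x1, b + t * c)].
  apply: (Mmax E); last first.
    right; split.
    - by exists x0, (p x0), 0; rewrite scale0r mul0r !addr0.
    - move=> x a y b [y1 [b1 [t1 [h1 [-> ->]]]]] [y2 [b2 [t2 [h2 [-> ->]]]]].
      exists (y1 + y2), (b1 + b2), (t1 + t2); split; first exact: Madd.
      by rewrite scalerDl mulrDl addrACA [b1 + _ + _]addrACA.
    - move=> u x a [y1 [b1 [t1 [h1 [-> ->]]]]].
      exists (u *: y1), (u * b1), (u * t1); split; first exact: Msc.
      by rewrite scalerDr scalerA mulrDr mulrA.
    - move=> x a [y [b [t [hb [-> ->]]]]].
      have [t0|t0|->] := ltgtP t 0; last by rewrite scale0r mul0r !addr0; exact: Mdom.
      + have s0 : 0 < - t by rewrite oppr_gt0.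
        have := I1 _ _ (Msc (- t)^-1 _ _ hb).
        have -> : (- t)^-1 *: y - x1 = (- t)^-1 *: (y + t *: x1).
          by rewrite scalerDr scalerA invrN mulNr mulVf ?lt_eqF // scaleN1r.
        rewrite phom ?invr_gt0 // -mulrBr.
        rewrite -(ler_pM2l s0) mulrA mulfV ?gt_eqF // mul1r.
        by rewrite lerBlDr mulNr addrC lerBrDr.
      + have := I2 _ _ (Msc t^-1 _ _ hb).
        have -> : t^-1 *: y + x1 = t^-1 *: (y + t *: x1).
          by rewrite scalerDr scalerA mulVf ?gt_eqF // scale1r.
        rewrite phom ?invr_gt0 // -mulrBr.
        rewrite -(ler_pM2l t0) mulrA mulfV ?gt_eqF // mul1r.
        by rewrite lerBrDr addrC.
  split.
    by move=> [x a] hxa; exists x, a, 0; rewrite scale0r mul0r !addr0.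
  move/(_ (x1, c)) => h; apply: (nx1 c); apply: h.
  by exists 0, 0, 1; rewrite scale1r mul1r !add0r.
have [f hf] := choice tot.
exists f; split.
- by move=> x y; apply: Mfun (hf _) (Madd _ _ _ _ (hf x) (hf y)).
- by move=> t x; apply: Mfun (hf _) (Msc _ _ _ (hf x)).
- by move=> x; apply: Mdom.
- exact: Mfun (hf _) Mx0.
Qed.

Lemma fc_ker (R : realType) (X : normedModType R) (Y Y' : set X) (f : X -> R) :
  linear_subspace Y -> finite_codim Y ->
  (forall x y, f (x + y) = f x + f y) -> (forall (t : R) x, f (t *: x) = t * f x) ->
  (forall y, Y' y <-> Y y /\ f y = 0) ->
  linear_subspace Y' /\ finite_codim Y'.
Proof.
move=> [Y0 [Yadd Ysc]] [n [v hv]] fadd fsc hY'.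
have f0 : f 0 = 0 by have := fsc 0 0; rewrite scale0r mul0r.
split.
  split; first by apply/hY'.
  split.
    move=> y z /hY' [hy fy] /hY' [hz fz]; apply/hY'; split; first exact: Yadd.
    by rewrite fadd fy fz addr0.
  move=> t y /hY' [hy fy]; apply/hY'; split; first exact: Ysc.
  by rewrite fsc fy mulr0.
have [[u Yu fu]|nu] := pselect (exists2 u, Y u & f u != 0); last first.
  exists n, v => x; have [y [c [hy ->]]] := hv x; exists y, c; split => //.
  apply/hY'; split => //; apply/eqP; apply: contrapT => fy; apply: nu.
  by exists y => //; apply/negP.
exists n.+1, (fun i => oapp v u (unlift ord_max i)) => x.
have [y [c [hy ->]]] := hv x.
exists (y - (f y / f u) *: u), (fun i => oapp c (f y / f u) (unlift ord_max i)).
split.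
  apply/hY'; split.
    by apply: Yadd => //; rewrite -scaleN1r; apply: (Ysc); apply: (Ysc).
  rewrite fadd -scaleN1r !fsc divfK // mulN1r subrr //.
rewrite big_ord_recr /= unlift_none /=.
have hw : forall (i : 'I_n) (h : (n <= n.+1)%N), widen_ord h i = lift ord_max i.
  by move=> i h; apply: ord_inj; rewrite lift_max.
rewrite [in RHS](eq_bigr (fun i => c i *: v i)); last by move=> i _; rewrite hw liftK.
by rewrite [RHS]addrCA subrK addrC.
Qed.

Unset Implicit Arguments.

Theorem corollary4p4 (R : realType) (X : completeNormedModType R) (A : set X) :
  balanced A -> bounded_set A -> convex A -> closed A -> A° !=set0 ->
  (exists K : set X, compact K /\ unit_cball `<=` minkowski_sum A K) ->
  forall lambda : R, 0 < lambda -> lambda < 2^-1 ->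
  exists (x : X) (Y : set X),
    A x /\ linear_subspace Y /\ finite_codim Y /\
    (forall y : X, Y y -> unit_cball y -> A (x + lambda *: y)).
Proof.
move=> hb hbd hc hcl [a0 ha0] [K [cK hK]] lam l0 l2.
have [r r0 hr] : exists2 r : R, 0 < r & forall z : X, `|z| < r -> A z.
  move: ha0; rewrite /interior /= => /nbhs_ballP [e e0 he].
  exists e => // z hz.
  have h1 : A (a0 + z).
    apply: he; rewrite -ball_normE /ball_ /=.
    have -> : a0 - (a0 + z) = - z by rewrite opprD addrA subrr add0r.
    by rewrite normrN.
  have h2 : A (- (a0 - z)).
    rewrite -scaleN1r; apply: hb; first by rewrite normrN1.
    apply: he; rewrite -ball_normE /ball_ /=.
    have -> : a0 - (a0 - z) = z by rewrite opprB addrC subrK.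
    by [].
  have h12 : 1 - 2^-1 = 2^-1 :> R by clear; lra.
  have := hc _ _ (2^-1) h1 h2; rewrite h12 -scalerDr opprB.
  have -> : a0 + z + (z - a0) = 2 *: z.
    by rewrite addrC addrA subrK scaler_nat mulr2n.
  rewrite scalerA mulVf ?scale1r; last by rewrite pnatr_eq0.
  apply; first by rewrite invr_ge0 ler0n.
  by rewrite invf_le1 ?ler1n // ltr0n.
have A0 : A 0 by apply: hr; rewrite normr0.
apply: contrapT => hneg.
have hneg' : forall Y : set X, linear_subspace Y -> finite_codim Y ->
    exists y, Y y /\ unit_cball y /\ ~ A (lam *: y).
  move=> Y hY fY; apply: contrapT => nex; apply: hneg; exists 0, Y.
  split => //; split => //; split => // y Yy By.
  rewrite add0r; apply: contrapT => nA; apply: nex; by exists y.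
pose p := mink A.
have hp : sublin p.
  split; first exact: (mink_add r0 hr hc).
  by move=> t x t0; apply: (mink_scale r0 hr x t0).
have [psi hpsi] := choice (fun x => hahn_banach x hp).
pose Ysub (s : seq X) := [set y : X | forall z, z \in s -> psi z y = 0].
have hY : forall s, linear_subspace (Ysub s) /\ finite_codim (Ysub s).
  elim => [|z s [IH1 IH2]].
    split; first by split; [|split] => *.
    exists 0%N, (fun _ => 0) => x; exists x, (fun _ => 0); split => //.
    by rewrite big_ord0 addr0.
  have [f1 f2 _ _] := hpsi z.
  apply: (fc_ker IH1 IH2 f1 f2) => y; split.
    move=> h; split; last by apply: h; rewrite in_cons eqxx.
    by move=> w hw; apply: h; rewrite in_cons hw orbT.
  move=> [h1 h2] w; rewrite in_cons => /orP [/eqP -> //| hw]; exact: h1.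
have hnext : forall s, exists y, Ysub s y /\ unit_cball y /\ ~ A (lam *: y).
  by move=> s; apply: hneg'; [exact: (hY s).1 | exact: (hY s).2].
have [nxt hnxt] := choice hnext.
pose L := fix L (n : nat) : seq X := if n is m.+1 then nxt (L m) :: L m else [::].
pose x n := nxt (L n).
have Lmem : forall i j, (i < j)%N -> x i \in L j.
  move=> i; elim => // j IH; rewrite ltnS leq_eqVlt => /orP [/eqP ->| /IH h].
    by rewrite /= in_cons eqxx.
  by rewrite /= in_cons h orbT.
have orth : forall i j, (i < j)%N -> psi (x i) (x j) = 0.
  by move=> i j ij; apply: (hnxt (L j)).1; exact: Lmem.
have px : forall n, lam^-1 <= p (x n).
  move=> n; have [_ [_ nA]] := hnxt (L n); rewrite leNgt; apply/negP => h.
  apply: nA; apply: (mink_lt1 r0 hr hb); rewrite /p (mink_scale r0 hr) //.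
  by rewrite -(ltr_pM2l l0) mulfV ?gt_eqF // in h.
have q2 : 2 < lam^-1.
  have : 2 * lam < 1 by clear - l0 l2; lra.
  by move=> h; rewrite -(ltr_pM2r l0) mulVf ?gt_eqF.
pose w := (lam^-1 - 2) / 4.
have w0 : 0 < w by apply: divr_gt0; [rewrite subr_gt0 | rewrite ltr0n].
pose d := r * w.
have d0 : 0 < d by apply: mulr_gt0.
have dr : d / r = w by rewrite /d mulrC mulKf ?gt_eqF.
have := cK; rewrite compact_cover => /(_ X K (fun k => ball k d)).
case.
- by move=> k _; apply: ball_open.
- by move=> k Kk; exists k => //; apply: ballxx.
move=> D' _ hcov.
have hdec : forall n, exists t : X * (X * X),
    [/\ A t.1, x n = t.1 + t.2.1, t.2.2 \in D' & ball t.2.2 d t.2.1].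
  move=> n; have [_ [Bx _]] := hnxt (L n).
  have [a Aa [k Kk akx]] := hK _ Bx.
  have [c Dc kc] := hcov _ Kk.
  by exists (a, (k, c)); split.
have [g hg] := choice hdec.
pose N := size (enum_fset D').
pose cs := [seq (g n).2.2 | n <- iota 0 N.+1].
have : ~~ uniq cs.
  apply/negP => u; have := @uniq_leq_size _ cs (enum_fset D') u.
  rewrite /cs size_map size_iota ltnn => h; suff : false by [].
  apply: h => c /mapP [n _ ->].
  by have [_ _ hD _] := hg n.
move/(uniqPn 0) => [i [j [ij]]]; rewrite size_map size_iota => jlt.
rewrite !(nth_map 0%N) ?size_iota ?(ltn_trans ij) // !nth_iota ?(ltn_trans ij) //.
rewrite !add0n => cij.
have [fa fh fle feq] := hpsi (x i).
have e1 : psi (x i) (x i - x j) = p (x i).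
  by rewrite fa -scaleN1r fh (orth i j ij) mulr0 addr0 feq.
have [Ai xi _ bi] := hg i.
have [Aj xj _ bj] := hg j.
move: bj; rewrite -cij => bj.
set c := (g i).2.2 in bi bj.
have e2 : x i - x j = ((g i).1 + - (g j).1) + (((g i).2.1 - c) + (c - (g j).2.1)).
  rewrite xi xj opprD addrACA; congr (_ + _).
  by rewrite addrA subrK.
have hpA : forall a, A a -> p a <= 1 by move=> a; apply: mink_A.
have hAn : A (- (g j).1) by rewrite -scaleN1r; apply: hb => //; rewrite normrN1.
have hball : forall u v, ball u d v -> p (v - u) <= w.
  move=> u v; rewrite -ball_normE /ball_ /= => h.
  rewrite -dr; apply: (mink_small r0 hr d0); by rewrite distrC.
have hball' : forall u v, ball u d v -> p (u - v) <= w.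
  move=> u v; rewrite -ball_normE /ball_ /= => h.
  by rewrite -dr; apply: (mink_small r0 hr d0).
have hadd := mink_add r0 hr hc.
have e3 : p (x i - x j) <= 1 + 1 + (w + w).
  rewrite e2; apply: le_trans (hadd _ _) _; apply: lerD.
    by apply: le_trans (hadd _ _) _; apply: lerD; apply: hpA.
  by apply: le_trans (hadd _ _) _; apply: lerD; [apply: hball | apply: hball'].
have := fle (x i - x j); rewrite e1 => e4.
have := px i; rewrite /w in e3 => e5.
clear - e3 e4 e5 q2; lra.
Qed.
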